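(* Suppose $\frac{\partial F_2}{\partial S}(S,I_2)\le I_2$ for all $S,I_2\ge0$. Then the model admits a unique single-strain ($I_2$)-infection equilibrium $E_2=(\tilde S,\tilde V_1,0,\tilde I_2)$ with $\tilde S,\tilde V_1,\tilde I_2>0$ if and only if $\mathcal{R}_2>1$.
   Context: The model is $\dot S=\Lambda-F_1(S,I_1)-F_2(S,I_2)-\lambda S$, $\dot V_1=rS-(\mu+kI_2)V_1$, $\dot I_1=F_1(S,I_1)-\alpha_1I_1$, $\dot I_2=F_2(S,I_2)+kI_2V_1-\alpha_2I_2$ on $\mathbb{R}^4_+$. The constants $\Lambda,\mu,r,k,\gamma_1,\gamma_2>0$ and $v_1,v_2\ge0$; $\lambda=r+\mu$ and $\alpha_i=\gamma_i+v_i+\mu$. For $i=1,2$ the incidence functions satisfy: - (H1) $F_i(S,I_i)=I_if_i(S,I_i)$ with $F_i,f_i\in C^2(\mathbb{R}^2_+,\mathbb{R}_+)$ and $F_i(0,I_i)=F_i(S,0)=0$; - (H2) $\partial f_i/\partial S>0$ and $\partial f_i/\partial I_i\le0$; - (H3) $\lim_{I_i\to0^+}F_i(S,I_i)/I_i$ exists and is positive for $S>0$. Let $S^0=\Lambda/\lambda$ and $\sigma_2=\frac{\partial F_2}{\partial I_2}(S^0,0)$. Set $\mathcal{R}_2=\sigma_2/\alpha_2+\frac{kr\Lambda}{\alpha_2\mu\lambda}$. *)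

(* Defs.v *)
From Stdlib Require Import Reals.
From Coquelicot Require Import Coquelicot.
Open Scope R_scope.

Definition dS (g : R -> R -> R) (S I : R) : R := Derive (fun s => g s I) S.
Definition dI (g : R -> R -> R) (S I : R) : R := Derive (fun i => g S i) I.

Definition C1_2d (g : R -> R -> R) : Prop :=
  forall x y : R,
    ex_derive (fun s => g s y) x /\ ex_derive (fun t => g x t) y /\
    continuity_2d_pt g x y /\ continuity_2d_pt (dS g) x y /\
    continuity_2d_pt (dI g) x y.

Definition C2_2d (g : R -> R -> R) : Prop :=
  C1_2d g /\ C1_2d (dS g) /\ C1_2d (dI g).

Definition incidence_hyp (F f : R -> R -> R) : Prop :=
  C2_2d F /\ C2_2d f /\
  (forall S I, 0 <= S -> 0 <= I -> 0 <= F S I /\ 0 <= f S I) /\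
  (forall S I, 0 <= S -> 0 <= I -> F S I = I * f S I) /\
  (forall I, 0 <= I -> F 0 I = 0) /\
  (forall S, 0 <= S -> F S 0 = 0) /\
  (forall S I, 0 <= S -> 0 <= I -> 0 < dS f S I /\ dI f S I <= 0) /\
  (forall S, 0 < S ->
     exists l, 0 < l /\ filterlim (fun I => F S I / I) (at_right 0) (locally l)).

Definition rhs_S (Lam mu r : R) (F1 F2 : R -> R -> R) (S V1 I1 I2 : R) : R :=
  Lam - F1 S I1 - F2 S I2 - (r + mu) * S.
Definition rhs_V1 (mu r k : R) (S V1 I1 I2 : R) : R :=
  r * S - (mu + k * I2) * V1.
Definition rhs_I1 (mu gamma1 v1 : R) (F1 : R -> R -> R) (S V1 I1 I2 : R) : R :=
  F1 S I1 - (gamma1 + v1 + mu) * I1.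
Definition rhs_I2 (mu k gamma2 v2 : R) (F2 : R -> R -> R) (S V1 I1 I2 : R) : R :=
  F2 S I2 + k * I2 * V1 - (gamma2 + v2 + mu) * I2.

Definition is_equilibrium (Lam mu r k gamma1 gamma2 v1 v2 : R)
    (F1 F2 : R -> R -> R) (S V1 I1 I2 : R) : Prop :=
  0 <= S /\ 0 <= V1 /\ 0 <= I1 /\ 0 <= I2 /\
  rhs_S Lam mu r F1 F2 S V1 I1 I2 = 0 /\
  rhs_V1 mu r k S V1 I1 I2 = 0 /\
  rhs_I1 mu gamma1 v1 F1 S V1 I1 I2 = 0 /\
  rhs_I2 mu k gamma2 v2 F2 S V1 I1 I2 = 0.

Definition is_E2 (Lam mu r k gamma1 gamma2 v1 v2 : R)
    (F1 F2 : R -> R -> R) (S V1 I2 : R) : Prop :=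
  0 < S /\ 0 < V1 /\ 0 < I2 /\
  is_equilibrium Lam mu r k gamma1 gamma2 v1 v2 F1 F2 S V1 0 I2.

Definition R2 (Lam mu r k gamma2 v2 : R) (F2 : R -> R -> R) : R :=
  let lam := r + mu in
  let alpha2 := gamma2 + v2 + mu in
  let S0 := Lam / lam in
  dI F2 S0 0 / alpha2 + k * r * Lam / (alpha2 * mu * lam).

(* Main.v *)
Require Import Defs.
From Stdlib Require Import Reals Lra Psatz.
From Coquelicot Require Import Coquelicot.
Open Scope R_scope.

Lemma cont_comp2 (g : R -> R -> R) (u v : R -> R) (x : R) :
  continuity_2d_pt g (u x) (v x) -> continuity_pt u x -> continuity_pt v x ->
  continuity_pt (fun t => g (u t) (v t)) x.
Proof.
  intros Hg Hu Hv.
  apply continuity_pt_locally. intros eps.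
  destruct (Hg eps) as [d Hd].
  rewrite continuity_pt_locally in Hu. rewrite continuity_pt_locally in Hv.
  destruct (Hu d) as [d1 H1]. destruct (Hv d) as [d2 H2].
  assert (Hm : 0 < Rmin d1 d2) by (apply Rmin_pos; apply cond_pos).
  exists (mkposreal _ Hm). intros y Hy.
  apply Hd.
  - apply H1. eapply Rlt_le_trans; [apply Hy| apply Rmin_l].
  - apply H2. eapply Rlt_le_trans; [apply Hy| apply Rmin_r].
Qed.

Lemma cont_of_deriv (f : R -> R) x : ex_derive f x -> continuity_pt f x.
Proof. intros H. apply continuity_pt_filterlim. exact (ex_derive_continuous f x H). Qed.

Lemma incr_from_deriv (f : R -> R) :
  (forall x, ex_derive f x) -> (forall x, 0 <= x -> 0 < Derive f x) ->
  forall a b, 0 <= a -> a < b -> f a < f b.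
Proof.
  intros Hd Hp a b Ha Hab.
  destruct (MVT_gen f a b (Derive f)) as [c [Hc Heq]].
  - intros x _. apply Derive_correct, Hd.
  - intros x _. apply cont_of_deriv, Hd.
  - rewrite Rmin_left in Hc by lra. rewrite Rmax_right in Hc by lra.
    assert (0 < Derive f c) by (apply Hp; lra).
    assert (0 < Derive f c * (b - a)) by (apply Rmult_lt_0_compat; lra). lra.
Qed.

Lemma nonincr_from_deriv (f : R -> R) :
  (forall x, ex_derive f x) -> (forall x, 0 <= x -> Derive f x <= 0) ->
  forall a b, 0 <= a -> a <= b -> f b <= f a.
Proof.
  intros Hd Hp a b Ha Hab.
  destruct (Req_dec a b) as [->|Hne]; [lra|].
  destruct (MVT_gen f a b (Derive f)) as [c [Hc Heq]].
  - intros x _. apply Derive_correct, Hd.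
  - intros x _. apply cont_of_deriv, Hd.
  - rewrite Rmin_left in Hc by lra. rewrite Rmax_right in Hc by lra.
    assert (Derive f c <= 0) by (apply Hp; lra).
    assert (Derive f c * (b - a) <= 0).
    { apply Rmult_le_0_r; lra. } lra.
Qed.
Lemma dI_at0 (F f : R -> R -> R) (S : R) :
  ex_derive (fun i => F S i) 0 -> continuity_2d_pt f S 0 ->
  (forall I, 0 <= I -> F S I = I * f S I) ->
  dI F S 0 = f S 0.
Proof.
  intros Hd Hc Hrel. unfold dI.
  set (l := Derive (fun i => F S i) 0).
  assert (Hl : derivable_pt_lim (fun i => F S i) 0 l).
  { apply is_derive_Reals. apply Derive_correct. exact Hd. }
  destruct (Req_dec l (f S 0)) as [E|Hne]; [exact E|exfalso].
  assert (Heps : 0 < Rabs (l - f S 0) / 2).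
  { assert (0 < Rabs (l - f S 0)) by (apply Rabs_pos_lt; lra). lra. }
  destruct (Hl _ Heps) as [d1 Hd1].
  destruct (Hc (mkposreal _ Heps)) as [d2 Hd2].
  set (h := Rmin d1 d2 / 2).
  assert (Hm : 0 < Rmin d1 d2) by (apply Rmin_pos; apply cond_pos).
  assert (Hh : 0 < h) by (unfold h; lra).
  assert (Hh1 : h < d1) by (unfold h; pose proof (Rmin_l d1 d2); lra).
  assert (Hh2 : h < d2) by (unfold h; pose proof (Rmin_r d1 d2); lra).
  specialize (Hd1 h ltac:(lra) ltac:(rewrite Rabs_pos_eq; lra)).
  specialize (Hd2 S h ltac:(rewrite Rminus_diag, Rabs_R0; apply cond_pos)
                ltac:(rewrite Rminus_0_r, Rabs_pos_eq; lra)).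
  simpl in Hd2.
  rewrite Rplus_0_l, (Hrel h ltac:(lra)), (Hrel 0 ltac:(lra)) in Hd1.
  replace ((h * f S h - 0 * f S 0) / h) with (f S h) in Hd1 by (field; lra).
  assert (Rabs (l - f S 0) <= Rabs (f S h - l) + Rabs (f S h - f S 0)).
  { replace (l - f S 0) with (-(f S h - l) + (f S h - f S 0)) by ring.
    eapply Rle_trans; [apply Rabs_triang|]. rewrite Rabs_Ropp; lra. }
  lra.
Qed.
Definition psiF (Lam mu r k a2 I : R) := (Lam - a2*I)*(mu+k*I)/(mu*(mu+r+k*I)).
Definition TF (Lam mu r k a2 I : R) := k*r*(Lam - a2*I)/(mu*(mu+r+k*I)).

Section Alg.
Variables (Lam mu r k a2 : R).
Hypotheses (HL : 0 < Lam) (Hm : 0 < mu) (Hr : 0 < r) (Hk : 0 < k) (Ha : 0 < a2).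

Lemma dpos I : 0 <= I -> 0 < mu + r + k * I /\ 0 < mu + k * I /\ 0 < mu * (mu + r + k * I).
Proof. intros. assert (0 <= k * I) by nra. repeat split; try lra. apply Rmult_lt_0_compat; lra. Qed.

Lemma psi_nonneg I : 0 <= I -> a2 * I <= Lam -> 0 <= psiF Lam mu r k a2 I.
Proof.
  intros. destruct (dpos I) as [? [? ?]]; auto. unfold psiF. apply Rdiv_le_0_compat.
  - apply Rmult_le_pos; lra.
  - lra.
Qed.

Lemma psi_pos I : 0 <= I -> a2 * I < Lam -> 0 < psiF Lam mu r k a2 I.
Proof.
  intros. destruct (dpos I) as [? [? ?]]; auto. unfold psiF. apply Rdiv_lt_0_compat.
  - apply Rmult_lt_0_compat; lra.
  - lra.
Qed.

Lemma T_decr a b : 0 <= a -> a < b -> TF Lam mu r k a2 b < TF Lam mu r k a2 a.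
Proof.
  intros Ha0 Hab. destruct (dpos a) as [A1 [A2 A3]]; auto. destruct (dpos b) as [B1 [B2 B3]]; try lra.
  assert (E : TF Lam mu r k a2 a - TF Lam mu r k a2 b =
    (k * r) * ((b - a) * (Lam * k + a2 * (mu + r))) / (mu * (mu + r + k * a) * (mu + r + k * b))).
  { unfold TF. field. lra. }
  assert (0 < (k * r) * ((b - a) * (Lam * k + a2 * (mu + r))) / (mu * (mu + r + k * a) * (mu + r + k * b))).
  { apply Rdiv_lt_0_compat.
    - apply Rmult_lt_0_compat; [apply Rmult_lt_0_compat; lra|].
      apply Rmult_lt_0_compat; [lra|]. assert (0 < Lam * k) by (apply Rmult_lt_0_compat; lra).
      assert (0 < a2 * (mu + r)) by (apply Rmult_lt_0_compat; lra). lra.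
    - apply Rmult_lt_0_compat; lra. }
  lra.
Qed.

Lemma psi_decr a b : 0 <= a -> a < b -> TF Lam mu r k a2 b < a2 ->
  psiF Lam mu r k a2 b < psiF Lam mu r k a2 a.
Proof.
  intros Ha0 Hab HT. destruct (dpos a) as [A1 [A2 A3]]; auto. destruct (dpos b) as [B1 [B2 B3]]; try lra.
  assert (E : psiF Lam mu r k a2 a - psiF Lam mu r k a2 b =
    (b - a) * (a2 * (mu + k * a) * (mu + r + k * b) - (Lam - a2 * b) * r * k)
      / (mu * (mu + r + k * a) * (mu + r + k * b))).
  { unfold psiF. field. lra. }
  assert (HT' : k * r * (Lam - a2 * b) < a2 * (mu * (mu + r + k * b))).
  { unfold TF in HT.
    apply (Rmult_lt_compat_r (mu * (mu + r + k * b))) in HT; [|lra].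
    unfold Rdiv in HT. rewrite Rmult_assoc, Rinv_l in HT by lra. lra. }
  assert (0 < (b - a) * (a2 * (mu + k * a) * (mu + r + k * b) - (Lam - a2 * b) * r * k)
      / (mu * (mu + r + k * a) * (mu + r + k * b))).
  { apply Rdiv_lt_0_compat.
    - apply Rmult_lt_0_compat; [lra|].
      assert (a2 * (mu * (mu + r + k * b)) <= a2 * (mu + k * a) * (mu + r + k * b)).
      { rewrite Rmult_assoc. apply Rmult_le_compat_l; [lra|]. apply Rmult_le_compat_r; [lra|].
        assert (0 <= k * a) by (apply Rmult_le_pos; lra). lra. }
      lra.
    - apply Rmult_lt_0_compat; lra. }
  lra.
Qed.

Lemma psi0 : psiF Lam mu r k a2 0 = Lam / (r + mu).
Proof. unfold psiF. field. lra. Qed.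
Lemma T0 : TF Lam mu r k a2 0 = k * r * Lam / (mu * (r + mu)).
Proof. unfold TF. field. lra. Qed.
Lemma psi_end : psiF Lam mu r k a2 (Lam / a2) = 0.
Proof. unfold psiF. field. 
  assert (0 < k * Lam) by (apply Rmult_lt_0_compat; lra).
  assert (0 < (mu + r) * a2) by (apply Rmult_lt_0_compat; lra). split; lra. Qed.
Lemma T_end : TF Lam mu r k a2 (Lam / a2) = 0.
Proof. unfold TF. field. 
  assert (0 < k * Lam) by (apply Rmult_lt_0_compat; lra).
  assert (0 < (mu + r) * a2) by (apply Rmult_lt_0_compat; lra). split; lra. Qed.

Lemma T_psi I : 0 <= I -> TF Lam mu r k a2 I = k * r * psiF Lam mu r k a2 I / (mu + k * I).
Proof. intros. destruct (dpos I) as [? [? ?]]; auto. unfold TF, psiF. field. lra. Qed.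

Lemma psi_of_eqs S V I fS : 0 <= I ->
  Lam - I * fS - (r + mu) * S = 0 ->
  r * S - (mu + k * I) * V = 0 ->
  I * fS + k * I * V - a2 * I = 0 ->
  S = psiF Lam mu r k a2 I.
Proof.
  intros HI e1 e2 e3. destruct (dpos I) as [? [? ?]]; auto.
  assert (E : (Lam - a2 * I) * (mu + k * I) = S * (mu * (mu + r + k * I))).
  { assert (e13 : Lam - a2 * I = (r + mu) * S - k * I * V) by lra.
    rewrite e13. assert (e2' : (mu + k * I) * V = r * S) by lra.
    transitivity ((r + mu) * S * (mu + k * I) - k * I * ((mu + k * I) * V)); [ring|].
    rewrite e2'. ring. }
  unfold psiF. rewrite E. field. lra.
Qed.

Lemma cont_psi I : 0 <= I -> continuity_pt (psiF Lam mu r k a2) I.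
Proof.
  intros. apply continuity_pt_filterlim. apply (ex_derive_continuous (psiF Lam mu r k a2) I).
  destruct (dpos I) as [? [? ?]]; auto. unfold psiF. auto_derive. lra.
Qed.
Lemma cont_T I : 0 <= I -> continuity_pt (TF Lam mu r k a2) I.
Proof.
  intros. apply continuity_pt_filterlim. apply (ex_derive_continuous (TF Lam mu r k a2) I).
  destruct (dpos I) as [? [? ?]]; auto. unfold TF. auto_derive. lra.
Qed.
End Alg.

Theorem mainTheorem5
  (Lam mu r k gamma1 gamma2 v1 v2 : R) (F1 f1 F2 f2 : R -> R -> R)
  (HLam : 0 < Lam) (Hmu : 0 < mu) (Hr : 0 < r) (Hk : 0 < k)
  (Hg1 : 0 < gamma1) (Hg2 : 0 < gamma2) (Hv1 : 0 <= v1) (Hv2 : 0 <= v2)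
  (HF1 : incidence_hyp F1 f1) (HF2 : incidence_hyp F2 f2)
  (Hcond : forall S I2, 0 <= S -> 0 <= I2 -> dS F2 S I2 <= I2) :
  (exists S V1 I2,
     is_E2 Lam mu r k gamma1 gamma2 v1 v2 F1 F2 S V1 I2 /\
     forall S' V1' I2',
       is_E2 Lam mu r k gamma1 gamma2 v1 v2 F1 F2 S' V1' I2' ->
       S' = S /\ V1' = V1 /\ I2' = I2)
  <-> R2 Lam mu r k gamma2 v2 F2 > 1.
Proof.
  destruct HF2 as [[HC1F _] [[HC1f _] [Hnn [Hrel [HF0 [HFS0 [Hder _]]]]]]].
  destruct HF1 as [_ [_ [_ [_ [_ [HF1S0 _]]]]]].
  set (a2 := gamma2 + v2 + mu).
  assert (Ha2 : 0 < a2) by (unfold a2; lra).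
  set (psi := psiF Lam mu r k a2).
  set (T := TF Lam mu r k a2).
  set (H := fun I => f2 (psi I) I + T I - a2).
  assert (MonoS : forall I x y, 0 <= I -> 0 <= x -> x < y -> f2 x I < f2 y I).
  { intros I x y HI Hx Hxy.
    apply (incr_from_deriv (fun s => f2 s I)); auto.
    - intros s; apply (HC1f s I).
    - intros s Hs; exact (proj1 (Hder s I Hs HI)). }
  assert (MonoI : forall S a b, 0 <= S -> 0 <= a -> a <= b -> f2 S b <= f2 S a).
  { intros S a b HS Ha Hab.
    apply (nonincr_from_deriv (fun i => f2 S i)); auto.
    - intros i; apply (HC1f S i).
    - intros i Hi; exact (proj2 (Hder S i HS Hi)). }
  assert (f2zero : forall I, 0 < I -> f2 0 I = 0).
  { intros I HI. pose proof (HF0 I ltac:(lra)) as E. rewrite Hrel in E by lra.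
    destruct (Rmult_integral _ _ E); lra. }
  assert (Hmono : forall a b, 0 <= a -> a < b -> a2 * b <= Lam -> T b < a2 -> H b < H a).
  { intros a b Ha Hab HbL HT. unfold H.
    assert (P1 : psi b < psi a) by (apply psi_decr; auto).
    assert (P2 : 0 <= psi b) by (apply psi_nonneg; auto; lra).
    assert (P3 : f2 (psi b) b <= f2 (psi b) a) by (apply MonoI; lra).
    assert (P4 : f2 (psi b) a < f2 (psi a) a) by (apply MonoS; lra).
    assert (P5 : T b < T a) by (apply T_decr; auto).
    lra. }
  assert (Hpos : forall I, 0 <= I -> a2 * I < Lam -> a2 <= T I -> 0 < H I).
  { intros I HI HIL HT. unfold H.
    assert (P1 : 0 < psi I) by (apply psi_pos; auto).
    assert (P2 : f2 0 I < f2 (psi I) I) by (apply MonoS; lra).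
    assert (P3 : 0 <= f2 0 I) by (apply (Hnn 0 I); lra).
    lra. }
  assert (Hcont : forall z, 0 <= z -> continuity_pt H z).
  { intros z Hz. unfold H.
    apply continuity_pt_minus; [apply continuity_pt_plus|apply continuity_pt_const; intros ? ?; reflexivity].
    - apply (cont_comp2 f2 psi (fun t => t)).
      + apply HC1f.
      + apply cont_psi; auto.
      + apply continuity_pt_id.
    - apply cont_T; auto. }
  assert (HS0pos : 0 <= Lam / (r + mu)) by (left; apply Rdiv_lt_0_compat; lra).
  assert (HH0 : H 0 = a2 * (R2 Lam mu r k gamma2 v2 F2 - 1)).
  { unfold H. unfold psi, T. rewrite psi0, T0 by auto.
    cbv beta zeta delta [R2].
    rewrite (dI_at0 F2 f2 (Lam / (r + mu))).
    - fold a2. field. repeat split; lra.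
    - apply HC1F.
    - apply HC1f.
    - intros I HI. apply Hrel; auto. }
  assert (HHend : H (Lam / a2) = - a2).
  { unfold H, psi, T. rewrite psi_end, T_end by auto.
    rewrite f2zero by (apply Rdiv_lt_0_compat; lra). ring. }
  assert (HE2 : forall S V I, is_E2 Lam mu r k gamma1 gamma2 v1 v2 F1 F2 S V I ->
     0 < I /\ a2 * I < Lam /\ S = psi I /\ V = r * S / (mu + k * I) /\ H I = 0 /\ T I < a2).
  { intros S V I HE.
    destruct HE as [HS [HV [HI [_ [_ [_ [_ [e1 [e2 [_ e3]]]]]]]]]].
    unfold rhs_S, rhs_V1, rhs_I2 in *.
    change (gamma2 + v2 + mu) with a2 in e3.
    rewrite HF1S0 in e1 by lra.
    rewrite Hrel in e1, e3 by lra.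
    assert (Spsi : S = psi I).
    { apply (psi_of_eqs Lam mu r k a2) with (fS := f2 S I) (V := V); lra. }
    assert (HkI : 0 < mu + k * I) by (assert (0 < k * I) by (apply Rmult_lt_0_compat; lra); lra).
    assert (HIL : a2 * I < Lam).
    { assert (0 < mu * V) by (apply Rmult_lt_0_compat; lra).
      assert (0 < mu * S) by (apply Rmult_lt_0_compat; lra). lra. }
    assert (HVe : V = r * S / (mu + k * I)) by (field_simplify_eq; lra).
    assert (HHI : H I = 0).
    { unfold H. rewrite <- Spsi. unfold T. rewrite T_psi by (auto; lra).
      fold psi. rewrite <- Spsi.
      assert (E : I * (f2 S I + k * V - a2) = 0) by lra.
      destruct (Rmult_integral _ _ E) as [E'|E']; [lra|].
      rewrite HVe in E'. replace (k * r * S / (mu + k * I)) with (k * (r * S / (mu + k * I))) by (field; lra).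
      lra. }
    repeat split; auto.
    destruct (Rlt_or_le (T I) a2) as [Hl|Hl]; auto.
    pose proof (Hpos I ltac:(lra) HIL Hl). lra. }
  split.
  - intros [S [V [I [HE _]]]].
    destruct (HE2 S V I HE) as [HI [HIL [_ [_ [HH HT]]]]].
    pose proof (Hmono 0 I ltac:(lra) HI ltac:(lra) HT) as Hm.
    rewrite HH, HH0 in Hm.
    assert (0 < R2 Lam mu r k gamma2 v2 F2 - 1).
    { apply (Rmult_lt_reg_l a2); lra. }
    lra.
  - intros HR.
    assert (HH0p : 0 < H 0) by (rewrite HH0; apply Rmult_lt_0_compat; lra).
    assert (HLa : 0 < Lam / a2) by (apply Rdiv_lt_0_compat; lra).
    destruct (Ranalysis5.IVT_interv (fun I => - H I) 0 (Lam / a2)) as [z [Hz Hzero]].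
    { intros x Hx. apply continuity_pt_opp, Hcont; lra. }
    { exact HLa. }
    { lra. }
    { rewrite HHend. lra. }
    assert (Hz0 : H z = 0) by lra.
    assert (Hzpos : 0 < z).
    { destruct (Req_dec z 0) as [E|E]; [rewrite E in Hz0; lra| lra]. }
    assert (Hzlt : z < Lam / a2).
    { destruct (Req_dec z (Lam / a2)) as [E|E]; [rewrite E in Hz0; lra| lra]. }
    assert (HzL : a2 * z < Lam).
    { apply (Rmult_lt_compat_l a2) in Hzlt; auto. 
      replace (a2 * (Lam / a2)) with Lam in Hzlt by (field; lra). exact Hzlt. }
    assert (HTz : T z < a2).
    { destruct (Rlt_or_le (T z) a2) as [Hl|Hl]; auto.
      pose proof (Hpos z ltac:(lra) HzL Hl). lra. }
    assert (Hpz : 0 < psi z) by (apply psi_pos; auto; lra).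
    assert (HkI : 0 < mu + k * z) by (assert (0 < k * z) by (apply Rmult_lt_0_compat; lra); lra).
    assert (Hf : f2 (psi z) z = a2 - k * r * psi z / (mu + k * z)).
    { unfold H in Hz0. unfold T in Hz0. rewrite T_psi in Hz0 by (auto; lra). fold psi in Hz0. lra. }
    assert (Hkz : 0 < k * z) by (apply Rmult_lt_0_compat; lra).
    assert (HVz : 0 < r * psi z / (mu + k * z)) by (apply Rdiv_lt_0_compat; [apply Rmult_lt_0_compat|]; lra).
    assert (eS : rhs_S Lam mu r F1 F2 (psi z) (r * psi z / (mu + k * z)) 0 z = 0).
    { unfold rhs_S. rewrite (HF1S0 (psi z)) by lra.
      rewrite (Hrel (psi z) z) by lra. rewrite Hf.
      unfold psi, psiF. field. split; lra. }
    assert (eV : rhs_V1 mu r k (psi z) (r * psi z / (mu + k * z)) 0 z = 0).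
    { unfold rhs_V1. field. lra. }
    assert (eI1 : rhs_I1 mu gamma1 v1 F1 (psi z) (r * psi z / (mu + k * z)) 0 z = 0).
    { unfold rhs_I1. rewrite (HF1S0 (psi z)) by lra. ring. }
    assert (eI2 : rhs_I2 mu k gamma2 v2 F2 (psi z) (r * psi z / (mu + k * z)) 0 z = 0).
    { unfold rhs_I2. rewrite (Hrel (psi z) z) by lra. rewrite Hf.
      change (gamma2 + v2 + mu) with a2. field. lra. }
    exists (psi z), (r * psi z / (mu + k * z)), z. split.
    { unfold is_E2, is_equilibrium. repeat split; try lra; assumption. }
    intros S' V' I' HE'.
      destruct (HE2 S' V' I' HE') as [HI' [HIL' [HS' [HV' [HH' HT']]]]].
      assert (Ez : I' = z).
      { destruct (Rtotal_order z I') as [Hlt|[Heq|Hgt]].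
        - pose proof (Hmono z I' ltac:(lra) Hlt ltac:(lra) HT'). lra.
        - auto.
        - pose proof (Hmono I' z ltac:(lra) Hgt ltac:(lra) HTz). lra. }
      subst I'. rewrite HV', HS'. auto.
Qed.
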